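(* Let $s\in[0,1]$ and let $(L_n)_{n\ge1}$, $(U_n)_{n\ge1}$ be random variables on a common probability space such that, almost surely, for every $n\ge1$: $L_n\le U_n$; $L_n\in[0,1]$ and $U_n\in[0,1]$; and (for $n\ge2$) $L_{n-1}\le L_n$ and $U_{n-1}\ge U_n$. Suppose moreover that $l_n:=\mathbb{E}L_n$ is nondecreasing with $l_n\to s$ and $u_n:=\mathbb{E}U_n$ is nonincreasing with $u_n\to s$. Let $G_0\sim U(0,1)$ be independent of $(L_n,U_n)_{n\ge1}$. Define $$N:=\inf\{n\ge1:\ G_0\le L_n\ \text{or}\ G_0>U_n\},$$ and $C_s:=1$ if $G_0\le L_N$ and $C_s:=0$ otherwise (i.e. if $G_0>U_N$). Then $N<\infty$ almost surely, $\mathbb{P}(C_s=1)=s$, and $\mathbb{P}(N>n)=u_n-l_n$ for every $n\ge1$.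
   Context: This formalizes ''Algorithm 3'': draw $G_0\sim U(0,1)$ once, then for $n=1,2,\dots$ obtain $L_n,U_n$; output $1$ if $G_0\le L_n$, output $0$ if $G_0>U_n$, otherwise continue with $n+1$. The variables $L_n,U_n$ are not assumed to satisfy $L_n\le s\le U_n$. *)

(* Defs.v *)
From HB Require Import structures.
From mathcomp Require Import all_boot all_order all_algebra.
From mathcomp Require Import all_classical all_reals all_analysis.
Set Implicit Arguments. Unset Strict Implicit. Unset Printing Implicit Defensive.
Import Order.TTheory GRing.Theory Num.Theory.
Local Open Scope classical_set_scope.
Local Open Scope ring_scope.

Section algorithm3.
Context {R : realType}.
Context {d : measure_display} {T : measurableType d}.

Definition gen_sigma_family (X Y : nat -> T -> R) : set (set T) :=
  <<s [set E | exists n (A : set R), (1 <= n)%N /\ measurable A /\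
                 (E = X n @^-1` A \/ E = Y n @^-1` A)] >>.

Definition indep_of_family (P : probability T R) (G : T -> R)
    (X Y : nat -> T -> R) : Prop :=
  forall (A : set R) (B : set T), measurable A -> gen_sigma_family X Y B ->
    P (G @^-1` A `&` B) = (P (G @^-1` A) * P B)%E.

Definition stops (L U : nat -> T -> R) (G : T -> R) (n : nat) (x : T) : Prop :=
  G x <= L n x \/ U n x < G x.

Definition N_eq (L U : nat -> T -> R) (G : T -> R) (n : nat) (x : T) : Prop :=
  (1 <= n)%N /\ stops L U G n x /\
  (forall k, (1 <= k < n)%N -> ~ stops L U G k x).

Definition N_finite (L U : nat -> T -> R) (G : T -> R) : set T :=
  [set x | exists n, N_eq L U G n x].

Definition N_gt (L U : nat -> T -> R) (G : T -> R) (n : nat) : set T :=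
  [set x | forall k, (1 <= k <= n)%N -> ~ stops L U G k x].

Definition Cs_one (L U : nat -> T -> R) (G : T -> R) : set T :=
  [set x | exists n, N_eq L U G n x /\ G x <= L n x].

End algorithm3.

(* Main.v *)
Require Import Defs.
From HB Require Import structures.
From mathcomp Require Import all_boot all_order all_algebra.
From mathcomp Require Import all_classical all_reals all_analysis.
From mathcomp Require Import lra.
From mathcomp Require Import measurable_realfun.
Import Order.TTheory GRing.Theory Num.Theory.
Local Open Scope classical_set_scope.
Local Open Scope ring_scope.

Lemma unif_cdf (R : realType) (c : R) : 0 <= c <= 1 ->
  uniform_prob (@ltr01 R) `]-oo, c] = c%:E.
Proof.
move=> /andP[c0 c1].
rewrite /uniform_prob integral_uniform_pdf.
have -> : `]-oo, c] `&` `[0, 1] = `[0, c]%classic.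
  apply/seteqP; split => x /=; rewrite !in_itv /=.
    by move=> [-> /andP[-> _]].
  by move=> /andP[x0 xc]; split => //; rewrite x0 (le_trans xc c1).
rewrite (eq_integral (fun=> 1%:E)); last first.
  move=> x; rewrite inE /= in_itv /= /uniform_pdf => /andP[x0 xc].
  by rewrite x0 (le_trans xc c1) subr0 invr1.
rewrite integral_cst //= lebesgue_measure_itv /= lte_fin.
case: ltgtP c0 => // [c0' _|<- _]; first by rewrite mul1e EFinN sube0.
by rewrite mul1e.
Qed.

Lemma mpre (d : measure_display) (T : measurableType d) (R : realType)
  (V : T -> R) (B : set R) : measurable_fun setT V -> measurable B ->
  measurable (V @^-1` B).
Proof. by move=> mV mB; rewrite -(setTI (V @^-1` B)); exact: mV. Qed.

Lemma mle (d : measure_display) (T : measurableType d) (R : realType)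
  (f g : T -> R) : measurable_fun setT f -> measurable_fun setT g ->
  measurable [set x | f x <= g x].
Proof.
move=> mf mg.
have mt : measurable ([set true] : set bool) by [].
have := measurable_realfun.measurable_fun_ler mf mg measurableT mt.
by rewrite setTI; congr measurable; apply/seteqP; split => x /=.
Qed.

Lemma mlt (d : measure_display) (T : measurableType d) (R : realType)
  (f g : T -> R) : measurable_fun setT f -> measurable_fun setT g ->
  measurable [set x | f x < g x].
Proof.
move=> mf mg.
have mt : measurable ([set true] : set bool) by [].
have := measurable_realfun.measurable_fun_ltr mf mg measurableT mt.
by rewrite setTI; congr measurable; apply/seteqP; split => x /=.
Qed.

Lemma eq_of_close (R : realType) (x y : R) :
  (forall m : nat, exists a, (a <= x <= a + (m.+1%:R)^-1) /\ (a <= y <= a + (m.+1%:R)^-1)) -> x = y.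
Proof.
move=> h.
suff H : forall x y : R, (forall m : nat, exists a, (a <= x <= a + (m.+1%:R)^-1) /\ (a <= y <= a + (m.+1%:R)^-1)) -> x <= y.
  apply/eqP; rewrite eq_le H // H // => m; have [a [? ?]] := h m; by exists a.
clear h x y => x y h; rewrite leNgt; apply/negP => yx.
set e := x - y.
have e0 : 0 < e by rewrite subr_gt0.
set m := Num.truncn (e^-1).
have hm : e^-1 < m.+1%:R := truncnS_gt _.
have [a [/andP[ax xa] /andP[ay ya]]] := h m.
have : e <= (m.+1%:R)^-1.
  rewrite /e; set t := (m.+1%:R)^-1 in ya xa *; lra.
rewrite leNgt => /negP; apply.
rewrite -(invrK e) ltf_pV2 ?posrE ?invr_gt0 // ltr0n.
Qed.

Lemma unif_cdf_le (R : realType) (c : R) : 0 <= c ->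
  (uniform_prob (@ltr01 R) `]-oo, c] <= c%:E)%E.
Proof.
move=> c0; have [c1|c1] := leP c 1; first by rewrite unif_cdf ?c0.
apply: (@le_trans _ _ 1%E); last by rewrite lee_fin ltW.
exact: probability_le1.
Qed.

Lemma key (R : realType) (d : measure_display) (T : measurableType d)
  (P : probability T R) (G : {RV P >-> R}) (V : T -> R) :
  measurable_fun setT V ->
  (forall A, measurable A -> distribution P G A = uniform_prob (@ltr01 R) A) ->
  (forall A B : set R, measurable A -> measurable B ->
     P (G @^-1` A `&` V @^-1` B) = (P (G @^-1` A) * P (V @^-1` B))%E) ->
  P (V @^-1` `[0, 1]%classic) = 1%E ->
  P [set x | G x <= V x] = ('E_P[V])%E.
Proof.
move=> mV hG hind h01.
set O := V @^-1` `[0, 1]%classic.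
have mO : measurable O by exact: mpre.
have PnO : P (~` O) = 0%E by rewrite probability_setC // h01 subee.
have mGm : measurable_fun setT G by [].
set X := [set x | G x <= V x].
have mX : measurable X by exact: mle.
have cdf c : 0 <= c <= 1 -> P (G @^-1` `]-oo, c]) = c%:E.
  move=> hc; have := hG _ (measurable_itv `]-oo, c]).
  by rewrite /distribution /pushforward /= => ->; rewrite unif_cdf.
have cdfle c : 0 <= c -> (P (G @^-1` `]-oo, c]) <= c%:E)%E.
  move=> hc; have := hG _ (measurable_itv `]-oo, c]).
  by rewrite /distribution /pushforward /= => ->; exact: unif_cdf_le.
have mGc c : measurable (G @^-1` `]-oo, c]) by exact: mpre.
have mVE : measurable_fun setT (EFin \o V : T -> \bar R) by exact/measurable_EFinP.
suff H : forall m : nat, exists a : R,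
    ((a%:E <= P X <= (a + (m.+1%:R)^-1)%:E) /\
     (a%:E <= 'E_P[V] <= (a + (m.+1%:R)^-1)%:E))%E.
  have [a [/andP[x1 x2] /andP[y1 y2]]] := H 0%N.
  have [x Ex] : exists x, P X = x%:E.
    by move: x1 x2; case: (P X) => [x| |] // _ _; exists x.
  have [y Ey] : exists y, ('E_P[V])%E = y%:E.
    by move: y1 y2; case: ('E_P[V])%E => [y| |] // _ _; exists y.
  rewrite Ex Ey; congr EFin; apply: eq_of_close => m.
  have [b] := H m; rewrite Ex Ey !lee_fin => -[/andP[? ?] /andP[? ?]].
  by exists b; split; apply/andP.
move=> m.
set k : R := m.+1%:R.
have k0 : 0 < k by rewrite ltr0n.
have ki0 : 0 < k^-1 by rewrite invr_gt0.
pose F (j : nat) := V @^-1` (`[0, 1]%classic `&` `[j%:R / k, j.+1%:R / k[%classic).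
set n := m.+2.
have mF j : measurable (F j).
  by apply: mpre => //; apply: measurableI.
have Fb j x : F j x -> [/\ 0 <= V x, V x <= 1, j%:R / k <= V x & V x < j.+1%:R / k].
  by rewrite /F /= !in_itv /= => -[/andP[-> ->] /andP[-> ->]].
have tF : trivIset setT F.
  apply/trivIsetP => i j _ _ ij; apply/seteqP; split => // x /=.
  move=> [/Fb[_ _ a1 a2] /Fb[_ _ b1 b2]].
  have hij : (i < j.+1)%N.
    by rewrite -(ltr_nat R) -(ltr_pM2r ki0) (le_lt_trans a1 b2).
  have hji : (j < i.+1)%N.
    by rewrite -(ltr_nat R) -(ltr_pM2r ki0) (le_lt_trans b1 a2).
  by move: ij; rewrite ltnS in hij hji; rewrite (@anti_leq i j) ?hij ?hji ?eqxx.

have UF : \big[setU/set0]_(j < n) F j = O.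
  rewrite -bigcup_mkord; apply/seteqP; split => x /=.
    by move=> [j _ /Fb[a b _ _]]; rewrite /O /= in_itv /= a b.
  rewrite /O /= in_itv /= => /andP[a b].
  have Vk0 : 0 <= V x * k by rewrite mulr_ge0 // ltW.
  exists (Num.truncn (V x * k)).
    rewrite /= truncn_lt_nat //; apply: (le_lt_trans (_ : _ <= k)).
      by rewrite ler_piMl // ltW.
    by rewrite ltr_nat.
  have /andP[t1 t2] := truncn_itv Vk0.
  rewrite /F /= !in_itv /= a b /=.
  by rewrite ler_pdivrMr // ltr_pdivlMr // t1 t2.
pose q j := fine (P (F j)).
have Pq j : P (F j) = (q j)%:E by rewrite /q fineK // fin_num_measure.
have q0 j : 0 <= q j by rewrite /q fine_ge0.
have tFn : trivIset `I_n F by apply: sub_trivIset tF.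
have mUF : measurable (\big[setU/set0]_(j < n) F j) by rewrite UF.
have sP : P O = (\sum_(j < n) P (F j))%E.
  by rewrite -UF measure_semi_additive_ord_I.
have sq : \sum_(j < n) q j = 1.
  have : (\sum_(j < n) q j)%:E = 1%E.
    by rewrite -sumEFin -h01 sP; apply: eq_bigr => j _; rewrite Pq.
  by case.
have cj0 j : 0 <= j%:R / k by rewrite divr_ge0 // ltW.
have cj1 j : (j < n)%N -> j%:R / k <= 1.
  by move=> jn; rewrite ler_pdivrMr // mul1r ler_nat -ltnS.
have mGF c j : measurable (G @^-1` `]-oo, c] `&` F j).
  by apply: measurableI; [exact: mGc | exact: mF].
have mXF j : measurable (X `&` F j) by apply: measurableI; [exact: mX | exact: mF].
have bX j : (j < n)%N -> ((j%:R / k * q j)%:E <= P (X `&` F j) <= (j.+1%:R / k * q j)%:E)%E.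
  move=> jn; apply/andP; split.
    rewrite EFinM -Pq -cdf ?cj0 ?cj1 // -hind //; last by apply: measurableI.
    apply: le_measure; rewrite ?inE; [exact: mGF | exact: mXF |].
    move=> x [/= Gx Fx]; split => //.
    have [_ _ h1 _] := Fb j x Fx.
    by move: Gx; rewrite in_itv /= /X /= => Gx; exact: le_trans Gx h1.
  apply: le_trans.
    apply: (le_measure _ (mem_set (mXF j)) (mem_set (mGF (j.+1%:R / k) j))).
    move=> x [/= Gx Fx]; split => //.
    have [_ _ _ h2] := Fb j x Fx.
    by rewrite /= in_itv /=; exact: ltW (le_lt_trans Gx h2).
  rewrite /F /= hind //; last by apply: measurableI.
  rewrite -/(F j) Pq EFinM; apply: lee_wpmul2r; first by rewrite lee_fin.
  exact: cdfle.
have mVF j : measurable_fun (F j) (EFin \o V : T -> \bar R).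
  exact: measurable_funTS.
have bE j : (j < n)%N -> ((j%:R / k * q j)%:E <= \int[P]_(x in F j) (V x)%:E <= (j.+1%:R / k * q j)%:E)%E.
  move=> jn; apply/andP; split.
    rewrite EFinM -Pq -integral_cst //; apply: ge0_le_integral => //.
    - by move=> x _; rewrite /= lee_fin.
    - by move=> x /Fb[_ _ h _]; rewrite /= lee_fin.
  rewrite EFinM -Pq -integral_cst //; apply: ge0_le_integral => //.
  - by move=> x /Fb[h _ _ _]; rewrite /= lee_fin.
  - by move=> x /Fb[_ _ _ h]; rewrite /= lee_fin ltW.
have sX : P X = (\sum_(j < n) P (X `&` F j))%E.
  rewrite (measureDI P mX mO).
  transitivity (0 + P (X `&` O))%E.
    congr (_ + _)%E.
    apply/eqP; rewrite eq_le measure_ge0 andbT -PnO.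
    apply: le_measure; rewrite ?inE; [exact: measurableD | exact: measurableC|].
    by move=> x [].
  rewrite add0e.
  have -> : X `&` O = \big[setU/set0]_(j < n) (X `&` F j).
    rewrite -UF -bigcup_mkord -(bigcup_mkord _ (fun j => X `&` F j)).
    apply/seteqP; split => x /=.
      by move=> [Xx [j jn Fx]]; exists j.
    by move=> [j jn [Xx Fx]]; split => //; exists j.
  have mU : measurable (\big[setU/set0]_(j < n) (X `&` F j)).
    by apply: bigsetU_measurable => j _; exact: mXF.
  exact: (@measure_semi_additive_ord_I _ _ _ P (fun j => X `&` F j) n
    (fun j _ => mXF j) (trivIset_setIl tFn) mU).
have sE : ('E_P[V] = \sum_(j < n) \int[P]_(x in F j) (V x)%:E)%E.
  rewrite unlock -(setUv O) integral_setU //; last 3 first.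
  - exact: measurableC.
  - by rewrite setUv.
  - by rewrite /disj_set setICr.
  rewrite [Y in (_ + Y)%E]null_set_integral //; last 2 first.
  - exact: measurableC.
  - exact: measurable_funTS.
  rewrite adde0 -UF -(big_mkord xpredT F) ge0_integral_bigsetU //; last 4 first.
  - exact: iota_uniq.
  - exact: sub_trivIset tF.
  - exact: measurable_funTS.
  - move=> x; rewrite big_mkord UF /O /= in_itv /= => /andP[h _].
    by rewrite lee_fin.
  by rewrite big_mkord.
have sup : \sum_(j < n) j.+1%:R / k * q j = \sum_(j < n) j%:R / k * q j + k^-1.
  under eq_bigr => j _ do rewrite -natr1 !mulrDl mul1r.
  by rewrite big_split /= -mulr_sumr sq mulr1.
exists (\sum_(j < n) j%:R / k * q j); rewrite -sup.
split; apply/andP; split.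
- rewrite sX -sumEFin; apply: lee_sum => j _.
  by case/andP: (bX j (ltn_ord j)).
- rewrite sX -sumEFin; apply: lee_sum => j _.
  by case/andP: (bX j (ltn_ord j)).
- rewrite sE -sumEFin; apply: lee_sum => j _.
  by case/andP: (bE j (ltn_ord j)).
- rewrite sE -sumEFin; apply: lee_sum => j _.
  by case/andP: (bE j (ltn_ord j)).
Qed.


Lemma mforall (d : measure_display) (T : measurableType d) (Q : nat -> bool)
  (S : nat -> set T) : (forall k, measurable (S k)) ->
  measurable [set x | forall k, Q k -> S k x].
Proof.
move=> mS.
have -> : [set x | forall k, Q k -> S k x] = \bigcap_k (if Q k then S k else setT).
  apply/seteqP; split => x /=.
    by move=> h k _; case: ifPn => // /h.
  by move=> h k qk; have := h k I; rewrite qk.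
by apply: bigcapT_measurable => k; case: ifP.
Qed.

Lemma eqN (d : measure_display) (T : measurableType d) (R : realType)
  (P : probability T R) (N0 A B : set T) : measurable N0 -> P N0 = 0%E ->
  measurable A -> measurable B -> (forall x, ~ N0 x -> (A x <-> B x)) ->
  P A = P B.
Proof.
move=> mN PN mA mB h.
have z C : measurable C -> P (C `&` N0) = 0%E.
  move=> mC; apply/eqP; rewrite eq_le measure_ge0 andbT -PN.
  apply: le_measure; rewrite ?inE; [exact: measurableI | exact: mN |].
  by move=> x [].
have hA : P A = (P (A `\` N0) + P (A `&` N0))%E := measureDI P mA mN.
have hB : P B = (P (B `\` N0) + P (B `&` N0))%E := measureDI P mB mN.
rewrite hA hB z // z //; congr (_ + _)%E.
by congr (P _); apply/seteqP; split => x [hx nx]; split => //; apply/(h _ nx).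
Qed.

Arguments mforall {d T}.
Arguments eqN {d T R} P {N0 A B}.

Theorem lemma2 (R : realType) (d : measure_display) (T : measurableType d)
  (P : probability T R) (s : R) (L U : nat -> {RV P >-> R}) (G0 : {RV P >-> R}) :
  0 <= s <= 1 ->
  {ae P, forall x, forall n, (1 <= n)%N ->
     L n x <= U n x /\ 0 <= L n x <= 1 /\ 0 <= U n x <= 1 /\
     ((2 <= n)%N -> L n.-1 x <= L n x /\ U n x <= U n.-1 x)} ->
  (forall n, (1 <= n)%N -> ('E_P[L n] <= 'E_P[L n.+1])%E) ->
  ('E_P[L n] @[n --> \oo] --> s%:E)%E ->
  (forall n, (1 <= n)%N -> ('E_P[U n.+1] <= 'E_P[U n])%E) ->
  ('E_P[U n] @[n --> \oo] --> s%:E)%E ->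
  (forall A : set R, measurable A ->
     distribution P G0 A = uniform_prob (@ltr01 R) A) ->
  indep_of_family P G0 (fun n => L n : T -> R) (fun n => U n : T -> R) ->
  P (N_finite (fun n => L n) (fun n => U n) G0) = 1%E /\
  P (Cs_one (fun n => L n) (fun n => U n) G0) = s%:E /\
  (forall n, (1 <= n)%N ->
     P (N_gt (fun n => L n) (fun n => U n) G0 n) = ('E_P[U n] - 'E_P[L n])%E).
Proof.
move=> s01 hae hLm hLc hUm hUc hunif hind.
have [N0 [mN0 PN0 subN]] := hae.
have gd x : ~ N0 x -> forall n, (1 <= n)%N ->
     L n x <= U n x /\ 0 <= L n x <= 1 /\ 0 <= U n x <= 1 /\
     ((2 <= n)%N -> L n.-1 x <= L n x /\ U n x <= U n.-1 x).
  by move=> nx; apply: contrapT => ng; apply: nx; exact: subN.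
have mono x : ~ N0 x -> forall k n, (1 <= k)%N -> (k <= n)%N ->
    L k x <= L n x /\ U n x <= U k x.
  move=> nx k n k1; elim: n => [|n IH] kn; first by move: (leq_trans k1 kn).
  rewrite leq_eqVlt in kn; case/orP: kn => [/eqP->|kn]; first by split.
  rewrite ltnS in kn.
  have [a b] := IH kn.
  have [_ [_ [_ h]]] := gd x nx n.+1 (leq_trans k1 (leqW kn)).
  have [c e] := h (leq_trans k1 kn).
  by split; [exact: le_trans a c | exact: le_trans e b].
have mG : measurable_fun setT G0 by [].
have mSL n : measurable [set x | G0 x <= L n x] by exact: mle.
have mSU n : measurable [set x | G0 x <= U n x] by exact: mle.
have mUG n : measurable [set x | U n x < G0 x] by exact: mlt.
have mst n : measurable [set x | stops (fun n => L n) (fun n => U n) G0 n x].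
  exact: (measurableU _ _ (mSL n) (mUG n)).
have P01 (V : {RV P >-> R}) : (forall x, ~ N0 x -> 0 <= V x <= 1) ->
    P (V @^-1` `[0, 1]%classic) = 1%E.
  move=> hV.
  have mV : measurable (V @^-1` `[0, 1]%classic) by exact: mpre.
  rewrite -(setCK (V @^-1` _)) probability_setC; last exact: measurableC.
  suff -> : P (~` (V @^-1` `[0, 1]%classic)) = 0%E by rewrite sube0.
  apply/eqP; rewrite eq_le measure_ge0 andbT -PN0.
  apply: le_measure; rewrite ?inE; [exact: measurableC | exact: mN0 |].
  move=> x /= hx; apply: contrapT => nx; apply: hx.
  by rewrite in_itv /=; exact: hV.
have PL n : (1 <= n)%N -> P [set x | G0 x <= L n x] = ('E_P[L n])%E.
  move=> n1; apply: key => //.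
  - move=> A B mA mB; apply: hind => //; apply: sub_sigma_algebra.
    by exists n, B; split => //; split => //; left.
  - by apply: P01 => x nx; have [_ [h _]] := gd x nx n n1.
have PU n : (1 <= n)%N -> P [set x | G0 x <= U n x] = ('E_P[U n])%E.
  move=> n1; apply: key => //.
  - move=> A B mA mB; apply: hind => //; apply: sub_sigma_algebra.
    by exists n, B; split => //; split => //; right.
  - by apply: P01 => x nx; have [_ [_ [h _]]] := gd x nx n n1.
set st := stops (fun n => L n) (fun n => U n) G0.
have first x k : (1 <= k)%N -> st k x ->
    exists N, N_eq (fun n => L n) (fun n => U n) G0 N x /\ (N <= k)%N.
  move=> k1 sk.
  pose p := fun j => (0 < j)%N && ((G0 x <= L j x) || (U j x < G0 x)).
  have ex : exists j, p j.
    by exists k; rewrite /p k1 /=; case: sk => h; apply/orP; [left|right].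
  case: (ex_minnP ex) => N /andP[N1 sN] minN.
  exists N; split; last by apply: minN; rewrite /p k1 /=; case: sk => h; apply/orP; [left|right].
  split => //; split; first by case/orP: sN => h; [left|right].
  move=> j /andP[j1 jN] sj.
  have : (N <= j)%N by apply: minN; rewrite /p j1 /=; case: sj => h; apply/orP; [left|right].
  by rewrite leqNgt jN.
have NGt n : (1 <= n)%N ->
    P (N_gt (fun n => L n) (fun n => U n) G0 n) = ('E_P[U n] - 'E_P[L n])%E.
  move=> n1.
  have mN : measurable (N_gt (fun n => L n) (fun n => U n) G0 n).
    have := mforall (fun k => (1 <= k <= n)%N) (fun k => ~` [set x | st k x])
             (fun k => measurableC (mst k)).
    by congr measurable; apply/seteqP; split => x /=.
  transitivity (P ([set x | G0 x <= U n x] `\` [set x | G0 x <= L n x])).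
    apply: (eqN P mN0 PN0) => //; first exact: measurableD.
    move=> x nx; split.
      move=> h; have := h n; rewrite n1 leqnn => /(_ isT) hn.
      split => /=.
        by rewrite leNgt; apply/negP => hu; apply: hn; right.
      by move=> hl; apply: hn; left.
    move=> [/= hu hl] k /andP[k1 kn] [hk|hk].
      by apply: hl; apply: le_trans hk _; have [] := mono x nx k n k1 kn.
    have [_ h2] := mono x nx k n k1 kn.
    by move: (lt_le_trans hk (le_trans hu h2)); rewrite ltxx.
  rewrite measureD //; last first.
    by rewrite (le_lt_trans (probability_le1 P (mSU n))) // ltry.
  congr (_ - _)%E; first exact: PU.
  rewrite -PL //.
  apply: (eqN P mN0 PN0) => //; first exact: measurableI.
  move=> x nx; split; first by case.
  move=> hl; split => //=; apply: le_trans hl _.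
  by have [] := gd x nx n n1.
have mpre n : measurable [set x | forall k, (1 <= k < n)%N -> ~ st k x].
  have := mforall (fun k => (1 <= k < n)%N) (fun k => ~` [set x | st k x])
             (fun k => measurableC (mst k)).
  by congr measurable; apply/seteqP; split => x /=.
have mNeq n : measurable [set x | N_eq (fun n => L n) (fun n => U n) G0 n x].
  have -> : [set x | N_eq (fun n => L n) (fun n => U n) G0 n x] =
      if (1 <= n)%N then [set x | st n x] `&` [set x | forall k, (1 <= k < n)%N -> ~ st k x]
      else set0.
    apply/seteqP; split => x /=; case: ifPn => n1 //=.
    - by move=> [_ [a b]]; split.
    - by move=> [h _]; rewrite h in n1.
  by case: (0 < n)%N; [apply: measurableI; [exact: mst | exact: mpre] | exact: measurable0].
have mCs : measurable (Cs_one (fun n => L n) (fun n => U n) G0).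
  have -> : Cs_one (fun n => L n) (fun n => U n) G0 =
      \bigcup_n ([set x | N_eq (fun n => L n) (fun n => U n) G0 n x] `&` [set x | G0 x <= L n x]).
    apply/seteqP; split => x /=; first by move=> [n [a b]]; exists n.
    by move=> [n _ [a b]]; exists n.
  by apply: bigcupT_measurable => n; apply: measurableI; [exact: mNeq | exact: mSL].
pose B n := [set x | G0 x <= L n.+1 x] `\` N0.
have mB n : measurable (B n) by apply: measurableD; [exact: mSL | exact: mN0].
have ndB : nondecreasing_seq B.
  move=> i j ij; apply/subsetPset => x [h nx]; split => //=; apply: le_trans h _.
  by have [] := mono x nx i.+1 j.+1 isT ij.
have PB n : P (B n) = ('E_P[L n.+1])%E.
  rewrite -PL //; apply: (eqN P mN0 PN0) => //.
  by move=> x nx; split; [case | split].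
have mUB : measurable (\bigcup_n B n) by exact: bigcupT_measurable.
have c1 := @nondecreasing_cvg_mu _ _ R P B mB mUB ndB.
have c2 : (P \o B) @ \oo --> s%:E.
  have -> : P \o B = (fun n => ('E_P[L n.+1])%E) by apply/funext => n; exact: PB.
  by move: hLc; rewrite -cvg_shiftS.
have Cs : P (Cs_one (fun n => L n) (fun n => U n) G0) = s%:E.
  rewrite -(cvg_unique (@ereal_hausdorff R) c1 c2).
  apply: (eqN P mN0 PN0) => // x nx; split.
    by move=> [n [[n1 _] h]]; exists n.-1 => //; split => //=; rewrite prednK.
  move=> [n _ [h _]].
  have [N [hN Nn]] := first x n.+1 isT (or_introl h).
  exists N; split => //.
  case: hN => N1 [[//|hu] _].
  have [a b] := mono x nx N n.+1 N1 Nn.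
  have [c _] := gd x nx n.+1 isT.
  have := lt_le_trans hu (le_trans h (le_trans c b)).
  by rewrite ltxx.
have mNgt n : measurable (N_gt (fun n => L n) (fun n => U n) G0 n).
  have := mforall (fun k => (1 <= k <= n)%N) (fun k => ~` [set x | st k x])
           (fun k => measurableC (mst k)).
  by congr measurable; apply/seteqP; split => x /=.
have mNF : measurable (N_finite (fun n => L n) (fun n => U n) G0).
  have -> : N_finite (fun n => L n) (fun n => U n) G0 =
      \bigcup_n [set x | N_eq (fun n => L n) (fun n => U n) G0 n x].
    apply/seteqP; split => x /=; first by move=> [n h]; exists n.
    by move=> [n _ h]; exists n.
  exact: bigcupT_measurable.
have leNF n : (1 <= n)%N ->
    (P (~` N_finite (fun n => L n) (fun n => U n) G0) <= 'E_P[U n] - 'E_P[L n])%E.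
  move=> n1; rewrite -NGt //.
  apply: le_measure; rewrite ?inE; [exact: measurableC | exact: mNgt |].
  move=> x nf k /andP[k1 kn] sk; apply: nf.
  by have [N [h _]] := first x k k1 sk; exists N.
have c3 : (fun n => 'E_P[U n] - 'E_P[L n])%E @ \oo --> 0%E.
  have := cvgeB _ hUc hLc; rewrite subee //; apply => //.
have z : (P (~` N_finite (fun n => L n) (fun n => U n) G0) <= 0)%E.
  rewrite -(cvg_lim (@ereal_hausdorff R) c3); apply: lime_ge.
    by apply/cvg_ex; exists 0%E.
  by exists 1%N => // n /= n1; exact: leNF.
split; last by split.
have := probability_setC P (measurableC mNF); rewrite setCK => ->.
have -> : P (~` N_finite (fun n => L n) (fun n => U n) G0) = 0%E.
  by apply/eqP; rewrite eq_le z measure_ge0.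
by rewrite sube0.
Qed.
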